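(* Let $\mathcal G=(\mathcal V,\mathcal E,w)$ be a finite simple graph with positive edge weights and arboricity at most $\alpha\ge1$, and let $w(\mathcal G)=\sum_{e\in\mathcal E}w(e)$. Let $\delta\in(0,1)$. There is a constant $c=c(\alpha)$ such that the following holds when $s\ge c\log(1/\delta)$. Each node $x$ with at least one incident edge performs $s$ independent trials, in each drawing one incident edge $(x,z)$ with probability $w(x,z)/w(x)$, where $w(x)=\sum_{(x,y)\in\mathcal E}w(x,y)$, and then selects the drawn edge of maximum weight over its $s$ trials (all nodes act independently). Then with probability at least $1-\delta$, $\sum_{x} w(e_x)\ge w(\mathcal G)/(16\alpha)$, where $e_x$ is the edge selected by $x$ (the sum over nodes that have incident edges).
   Context: The arboricity of a graph is the minimum number of forests into which its edge set can be partitioned. *)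

(* Defs.v *)
From mathcomp Require Import all_boot.
From Stdlib Require Import Reals.

Set Implicit Arguments.
Unset Strict Implicit.
Unset Printing Implicit Defensive.

Definition acyclic (T : finType) (r : rel T) : Prop :=
  forall c : seq T, uniq c -> (2 < size c)%N -> ~~ cycle r c.

Definition arboricity_le (T : finType) (e : rel T) (a : nat) : Prop :=
  exists col : T -> T -> 'I_a,
    (forall x y, e x y -> col x y = col y x) /\
    (forall i : 'I_a, acyclic [rel x y | e x y && (col x y == i)]).

Definition wdeg (T : finType) (e : rel T) (w : T -> T -> R) (x : T) : R :=
  \big[Rplus/0%R]_(y | e x y) w x y.

(* w(G) = sum over (unordered) edges of their weight *)
Definition wgraph (T : finType) (e : rel T) (w : T -> T -> R) : R :=
  (/ 2 * \big[Rplus/0%R]_(x : T) wdeg e w x)%R.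

Definition has_edge (T : finType) (e : rel T) (x : T) : bool :=
  [exists y, e x y].

(* Isolated nodes perform no sampling; formally they draw
   themselves with probability 1 (irrelevant: they do not enter the sum). *)
Definition pdraw (T : finType) (e : rel T) (w : T -> T -> R) (x z : T) : R :=
  if e x z then (w x z / wdeg e w x)%R
  else if has_edge e x then 0%R
  else if z == x then 1%R else 0%R.

(* Outcome of the experiment: om x j = the vertex z drawn by x in trial j. *)
Definition outcome (T : finType) (s : nat) := {ffun T -> {ffun 'I_s -> T}}.

Definition outcome_prob (T : finType) (e : rel T) (w : T -> T -> R) (s : nat)
    (om : outcome T s) : R :=
  \big[Rmult/1%R]_(x : T) \big[Rmult/1%R]_(j < s) pdraw e w x (om x j).

Definition selected_weight (T : finType) (w : T -> T -> R) (s : nat)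
    (om : outcome T s) (x : T) : R :=
  \big[Rmax/0%R]_(j < s) w x (om x j).

Definition total_selected (T : finType) (e : rel T) (w : T -> T -> R) (s : nat)
    (om : outcome T s) : R :=
  \big[Rplus/0%R]_(x | has_edge e x) selected_weight w om x.

Definition success_prob (T : finType) (e : rel T) (w : T -> T -> R) (a s : nat)
  : R :=
  \big[Rplus/0%R]_(om : outcome T s)
     (if Rle_dec (wgraph e w / (16 * INR a)) (total_selected e w om)
      then outcome_prob e w om else 0%R).

(* Main.v *)
From HB Require Import structures.
Require Import Defs.
From mathcomp Require Import all_boot.
From Stdlib Require Import Reals Lra Lia.

Set Implicit Arguments.
Unset Strict Implicit.
Unset Printing Implicit Defensive.


Section Forest.
Variable T : finType.
Variable r : rel T.
Hypothesis rirr : forall x, ~~ r x x.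
Hypothesis rsym : forall x y, r x y = r y x.
Hypothesis racy : acyclic r.

Lemma leaf_exists (S : {set T}) : S != set0 ->
  exists2 v, v \in S & forall u1 u2, u1 \in S -> u2 \in S -> r v u1 -> r v u2 -> u1 = u2.
Proof.
move=> S0.
have [/exists_inP [v vS /forall_inP H] | ] := boolP [exists v in S,
    [forall u1 in S, [forall u2 in S, r v u1 ==> r v u2 ==> (u1 == u2)]]].
  exists v => // u1 u2 u1S u2S r1 r2.
  by have /forall_inP /(_ u2 u2S) := H u1 u1S; rewrite r1 r2 /= => /eqP.
rewrite negb_exists_in => /forall_inP Hn.
have two : forall v, v \in S -> forall y, exists2 u, u \in S & r v u && (u != y).
  move=> v vS y; have /forall_inPn [u1 u1S] := Hn v vS.
  move=> /forall_inPn [u2 u2S]; rewrite !negb_imply => /and3P [r1 r2 ne12].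
  have [e1|ne1] := eqVneq u1 y.
    by exists u2 => //; rewrite r2 -e1 eq_sym.
  by exists u1 => //; rewrite r1.
have paths : forall n, exists x y p, [/\ path r x (y :: p), uniq (x :: y :: p),
    all (fun z => z \in S) (x :: y :: p) & size p = n].
  elim=> [|n [x [y [p [Hp Hu Ha Hs]]]]].
    have /set0Pn [v vS] := S0.
    have [u uS /andP [ru _]] := two v vS v.
    exists v, u, [::]; split => //=.
      by rewrite ru.
    rewrite inE andbT; apply/eqP => uv; move: ru; rewrite uv.
      by rewrite (negbTE (rirr u)).
    by rewrite vS uS.
  have xS : x \in S by move: Ha => /= /andP [].
  have [u uS /andP [rxu uy]] := two x xS y.
  have [uin | unin] := boolP (u \in x :: y :: p).
    exfalso.
    move: uin; rewrite inE => /orP [/eqP ux| ].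
      by move: rxu; rewrite ux (negbTE (rirr x)).
    rewrite inE (negbTE uy) /= => uin.
    move: Hp Hu; case/splitPr: uin => p1 p2 Hp Hu.
    set c := x :: y :: rcons p1 u.
    have ec : x :: y :: p1 ++ u :: p2 = c ++ p2 by rewrite /c /= cat_rcons.
    have Hu' : uniq c by move: Hu; rewrite ec cat_uniq => /andP [].
    have Hc : cycle r c.
      rewrite /c /cycle rcons_path; apply/andP; split.
        move: Hp; have -> : y :: p1 ++ u :: p2 = (y :: rcons p1 u) ++ p2 by rewrite /= cat_rcons.
        by rewrite cat_path => /andP [].
      by rewrite /= last_rcons rsym.
    have Hs3 : (2 < size c)%N by rewrite /c /= size_rcons.
    by move: (racy Hu' Hs3); rewrite Hc.
  exists u, x, (y :: p); split => //=.
  - by rewrite rsym rxu.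
  - by rewrite unin.
  - by rewrite uS.
  - by rewrite Hs.
have [x [y [p [_ Hu Ha Hs]]]] := paths #|S|.
have := uniq_leq_size (s2 := enum S) Hu.
rewrite -cardE /= Hs => H; have := H _; rewrite ltnNge leqnSn /= => H2; exfalso; apply: notF; apply: H2 => z zin.
by rewrite mem_enum; move/allP: Ha; apply.
Qed.

Lemma forest_orient : exists p : T -> option T,
  (forall x y, p x = Some y -> r x y) /\
  (forall x y, r x y -> p x = Some y \/ p y = Some x).
Proof.
suff H : forall n (S : {set T}), #|S| = n -> exists p : T -> option T,
  (forall x y, p x = Some y -> r x y) /\
  (forall x y, x \in S -> y \in S -> r x y -> p x = Some y \/ p y = Some x).
  have [p [H1 H2]] := H _ [set: T] erefl.
  by exists p; split => // x y; apply: H2; rewrite inE.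
elim=> [|n IH] S cS.
  exists (fun _ => None); split => // x y; move: cS => /eqP; rewrite cards_eq0 => /eqP ->.
  by rewrite inE.
have S0 : S != set0 by rewrite -card_gt0 cS.
have [v vS Hv] := leaf_exists S0.
have cS' : #|S :\ v| = n by rewrite (cardsD1 v) vS in cS; case: cS.
have [p [P1 P2]] := IH (S :\ v) cS'.
exists (fun x => if x == v then [pick u in S | r v u] else p x); split.
  move=> x y; case: eqP => [->|_]; last exact: P1.
  by case: pickP => // u /andP [_ ru] [<-].
have pv : forall y, y \in S -> r v y -> [pick u in S | r v u] = Some y.
  move=> y yS ry; case: pickP => [u /andP [uS ru]|].
    by rewrite (Hv u y).
  by move/(_ y); rewrite yS ry.
move=> x y xS yS rxy.
case: (eqVneq x v) => [xv|xv].
  by left; apply: pv => //; rewrite -xv.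
case: (eqVneq y v) => [yv|yv].
  by right;  apply: pv => //; move: rxy; rewrite yv rsym.
apply: P2 => //; rewrite !inE ?xv ?yv //.
Qed.
End Forest.

Lemma orient_arb (T : finType) (e : rel T) (a : nat) :
  (forall x, ~~ e x x) -> (forall x y, e x y = e y x) -> arboricity_le e a ->
  exists o : rel T, [/\ forall x y, o x y -> e x y,
    forall x y, e x y -> o x y || o y x &
    forall x, #|[pred y | o x y]| <= a].
Proof.
move=> eirr esym [col [csym cacy]].
have hP : forall i : 'I_a, exists p : T -> option T,
  (forall x y, p x = Some y -> e x y && (col x y == i)) /\
  (forall x y, e x y && (col x y == i) -> p x = Some y \/ p y = Some x).
  move=> i; apply: (@forest_orient T [rel x y | e x y && (col x y == i)]).
  - by move=> x /=; rewrite (negbTE (eirr x)).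
  - move=> x y /=; rewrite esym; case exy: (e y x) => //=.
    by rewrite csym // esym.
  - exact: cacy.
have [P HP] := fin_all_exists hP.
exists [rel x y | e x y && (P (col x y) x == Some y)]; split.
- by move=> x y /andP [].
- move=> x y exy /=; rewrite exy esym exy /=.
  have exy' : e x y && (col x y == col x y) by rewrite exy eqxx.
  have [H|H] := (HP (col x y)).2 x y exy'.
    by rewrite H eqxx.
  by rewrite -(csym x y exy) H eqxx orbT.
- move=> x.
  apply: (leq_trans (n := #|pmap (fun i => P i x) (enum 'I_a)|)).
    apply: subset_leq_card; apply/subsetP => y /= /andP [_ /eqP H].
    by rewrite mem_pmap; apply/mapP; exists (col x y); rewrite ?mem_enum.
  apply: (leq_trans (card_size _)).
  by rewrite size_pmap (leq_trans (count_size _ _)) // size_enum_ord.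
Qed.

Open Scope R_scope.


Lemma RplusA : associative Rplus. Proof. move=> x y z; ring. Qed.
Lemma RplusC : commutative Rplus. Proof. move=> x y; ring. Qed.
Lemma Rplus0 : left_id 0%R Rplus. Proof. move=> x; ring. Qed.
Lemma RmultA : associative Rmult. Proof. move=> x y z; ring. Qed.
Lemma RmultC : commutative Rmult. Proof. move=> x y; ring. Qed.
Lemma Rmult1 : left_id 1%R Rmult. Proof. move=> x; ring. Qed.
Lemma Rmult0l : left_zero 0%R Rmult. Proof. move=> x; ring. Qed.
Lemma Rmult0r : right_zero 0%R Rmult. Proof. move=> x; ring. Qed.
Lemma RmultDl : left_distributive Rmult Rplus. Proof. move=> x y z; ring. Qed.
Lemma RmultDr : right_distributive Rmult Rplus. Proof. move=> x y z; ring. Qed.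
HB.instance Definition _ := Monoid.isComLaw.Build R 0%R Rplus RplusA RplusC Rplus0.
HB.instance Definition _ := Monoid.isComLaw.Build R 1%R Rmult RmultA RmultC Rmult1.
HB.instance Definition _ := Monoid.isMulLaw.Build R 0%R Rmult Rmult0l Rmult0r.
HB.instance Definition _ := Monoid.isAddLaw.Build R Rmult Rplus RmultDl RmultDr.


Lemma bigR_le (I : Type) (r : seq I) (P : pred I) (F G : I -> R) :
  (forall i, P i -> F i <= G i) ->
  \big[Rplus/0]_(i <- r | P i) F i <= \big[Rplus/0]_(i <- r | P i) G i.
Proof.
move=> H; apply: (big_ind2 (fun a b => a <= b)); [lra| |exact H].
move=> a b c d; lra.
Qed.

Lemma bigR_ge0 (I : Type) (r : seq I) (P : pred I) (F : I -> R) :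
  (forall i, P i -> 0 <= F i) -> 0 <= \big[Rplus/0]_(i <- r | P i) F i.
Proof.
move=> H; apply: (big_ind (fun a => 0 <= a)); [lra| |exact H].
move=> a b; lra.
Qed.

Lemma sum_prod_ffun (I J : finType) (F : I -> J -> R) :
  \big[Rplus/0]_(f : {ffun I -> J}) \big[Rmult/1]_(i : I) F i (f i) =
  \big[Rmult/1]_(i : I) \big[Rplus/0]_(j : J) F i j.
Proof. by rewrite bigA_distr_bigA. Qed.

Lemma bigR_distrl (I : Type) (r : seq I) (P : pred I) (F : I -> R) c :
  \big[Rplus/0]_(i <- r | P i) F i * c = \big[Rplus/0]_(i <- r | P i) (F i * c).
Proof. by rewrite big_distrl. Qed.

Lemma numeric (d : R) (s : nat) : 0 < d < 1 ->
  (1 / ln (39/32)) * ln (1 / d) <= INR s -> 16/13 * (2/3)^s <= d.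
Proof.
intros [d0 d1] Hs.
assert (k0 : 0 < ln (39/32)).
{ rewrite <- ln_1; apply ln_increasing; lra. }
assert (Ld : ln (1/d) = - ln d).
{ unfold Rdiv; rewrite Rmult_1_l; apply ln_Rinv; lra. }
assert (ld : ln d < 0).
{ rewrite <- ln_1; apply ln_increasing; lra. }
assert (Hs2 : - ln d <= INR s * ln (39/32)).
{ rewrite Ld in Hs.
  apply (Rmult_le_compat_r (ln (39/32))) in Hs; [|lra].
  replace (1 / ln (39 / 32) * - ln d * ln (39 / 32)) with (- ln d) in Hs; [lra|].
  field; lra. }
assert (s1 : le 1 s).
{ destruct s as [|s]; [simpl in Hs2; lra| apply le_n_S, le_0_n]. }
assert (H1 : 16/13 * (2/3)^s <= (32/39)^s).
{ replace (32/39) with (16/13 * (2/3)) by field.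
  rewrite Rpow_mult_distr.
  apply Rmult_le_compat_r; [apply pow_le; lra|].
  replace (16/13) with ((16/13)^1) at 1 by (simpl; lra).
  apply Rle_pow; [lra|exact s1]. }
assert (H2 : (32/39)^s = exp (INR s * - ln (39/32))).
{ rewrite -Rpower_pow; last lra. unfold Rpower.
  replace (32/39) with (/ (39/32)) by field.
  rewrite ln_Rinv; [reflexivity|lra]. }
assert (H3 : exp (INR s * - ln (39/32)) <= exp (ln d)).
{ destruct (Rle_lt_or_eq_dec (INR s * - ln (39/32)) (ln d)) as [Hl|He]; [lra| |].
  - left; apply exp_increasing; exact Hl.
  - rewrite He; lra. }
rewrite exp_ln in H3; last lra.
lra.
Qed.


Definition rleb (a b : R) : bool := if Rle_dec a b then true else false.
Definition rltb (a b : R) : bool := if Rlt_dec a b then true else false.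
Lemma rlebP a b : reflect (a <= b) (rleb a b).
Proof. by rewrite /rleb; case: Rle_dec => H; constructor. Qed.
Lemma rltbP a b : reflect (a < b) (rltb a b).
Proof. by rewrite /rltb; case: Rlt_dec => H; constructor. Qed.
Lemma rltbNle a b : rltb a b = ~~ rleb b a.
Proof.
by rewrite /rltb /rleb; case: Rlt_dec; case: Rle_dec => //= H1 H2; exfalso; lra.
Qed.

Lemma exists_max_seq (T : eqType) (s : seq T) (f : T -> R) : s <> [::] ->
  exists2 y, y \in s & forall z, z \in s -> f z <= f y.
Proof.
elim: s => // a s IH _.
case: s IH => [|b s] IH.
  by exists a; rewrite ?inE // => z; rewrite inE => /eqP ->; lra.
have [y ys Hy] := IH ltac:(discriminate).
case: (Rle_lt_dec (f a) (f y)) => H.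
  exists y; first by rewrite inE ys orbT.
  by move=> z; rewrite inE => /orP [/eqP ->|/Hy].
exists a; first by rewrite inE eqxx.
move=> z; rewrite inE => /orP [/eqP ->|/Hy]; lra.
Qed.

Lemma exists_max (T : finType) (P : pred T) (f : T -> R) : (exists x, P x) ->
  exists2 y, P y & forall z, P z -> f z <= f y.
Proof.
move=> [x Px].
have [|y] := @exists_max_seq _ (enum P) f.
  by move=> H; have := mem_enum P x; rewrite H in_nil; move=> /esym; rewrite unfold_in Px.
by rewrite mem_enum => Py Hy; exists y => // z Pz; apply: Hy; rewrite mem_enum.
Qed.

Lemma exists_min (T : finType) (P : pred T) (f : T -> R) : (exists x, P x) ->
  exists2 y, P y & forall z, P z -> f y <= f z.
Proof.
move=> H; have [y Py Hy] := exists_max (fun x => - f x) H.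
by exists y => // z /Hy; lra.
Qed.

Lemma bigR_sub (I : finType) (P Q : pred I) (F : I -> R) :
  (forall i, P i -> Q i) -> (forall i, Q i -> 0 <= F i) ->
  \big[Rplus/0]_(i | P i) F i <= \big[Rplus/0]_(i | Q i) F i.
Proof.
move=> PQ F0; rewrite (big_mkcond P) (big_mkcond Q); apply: bigR_le => i _.
case Pi: (P i); first by rewrite (PQ i Pi); lra.
by case Qi: (Q i) => //; [apply: F0 | lra].
Qed.

Lemma bigR_const (I : finType) (P : pred I) c :
  \big[Rplus/0]_(i | P i) c = INR #|P| * c.
Proof.
rewrite big_const; elim: #|P| => [|n IH] /=; first lra.
by rewrite IH; change (c + INR n * c = INR (S n) * c); rewrite S_INR; lra.
Qed.

Section Thr.
Variable T : finType.
Variable e : rel T.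
Variable w : T -> T -> R.
Hypothesis wpos : forall x y, e x y -> 0 < w x y.

Lemma wdeg_ge0 x : 0 <= wdeg e w x.
Proof. by apply: bigR_ge0 => y /wpos; lra. Qed.

Lemma wdeg_gt0 x : has_edge e x -> 0 < wdeg e w x.
Proof.
move=> /existsP [y exy]; rewrite /wdeg (bigD1 y) //=.
have := wpos exy; have : 0 <= \big[Rplus/0]_(i | e x i && (i != y)) w x i.
  by apply: bigR_ge0 => z /andP [/wpos]; lra.
lra.
Qed.

Lemma threshold x : exists t, [/\ 0 <= t,
  (has_edge e x -> 0 < t /\
     /3 * wdeg e w x <= \big[Rplus/0]_(y | e x y && rleb t (w x y)) w x y),
  \big[Rplus/0]_(y | e x y && rltb t (w x y)) w x y <= /3 * wdeg e w x &
  (~~ has_edge e x -> t = 0)].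
Proof.
have W0 := wdeg_ge0 x.
case hx: (has_edge e x); last first.
  exists 0; split => //; first lra.
  rewrite big_pred0; first lra.
  by move=> y; move/negbT: hx => /existsPn /(_ y) /negbTE ->.
pose C y := e x y && rleb (/3 * wdeg e w x)
   (\big[Rplus/0]_(z | e x z && rleb (w x y) (w x z)) w x z).
have [y0 ey0 Hy0] : exists2 y, e x y & forall z, e x z -> w x y <= w x z.
  by apply: exists_min; move/existsP: hx.
have [ys Cys Hys] : exists2 y, C y & forall z, C z -> w x z <= w x y.
  apply: exists_max; exists y0; rewrite /C ey0 /=; apply/rlebP.
  rewrite (eq_bigl (fun z => e x z)); first by rewrite -/(wdeg e w x); lra.
  move=> z; case ez: (e x z) => //=; apply/rlebP; exact: Hy0.
move: Cys => /andP [eys /rlebP Hs].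
exists (w x ys); split => //.
- by have := wpos eys; lra.
- by move=> _; split => //; apply: wpos.
- case: (Rle_lt_dec (\big[Rplus/0]_(y | e x y && rltb (w x ys) (w x y)) w x y)
      (/3 * wdeg e w x)) => // Hlt; exfalso.
  have [y1 Py1 Hy1] : exists2 y, e x y && rltb (w x ys) (w x y) &
      forall z, e x z && rltb (w x ys) (w x z) -> w x y <= w x z.
    apply: exists_min.
    case: (pickP (fun y => e x y && rltb (w x ys) (w x y))) => [y Py|H0].
      by exists y.
    by move: Hlt; rewrite big_pred0 //; lra.
  move: (Py1) => /andP [ey1 /rltbP lt1].
  have Cy1 : C y1.
    rewrite /C ey1 /=; apply/rlebP.
    rewrite (eq_bigl (fun z => e x z && rltb (w x ys) (w x z))); first lra.
    move=> z; case ez: (e x z) => //=.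
    apply/rlebP/rltbP => [H|H]; first lra.
    by apply: Hy1; rewrite ez; apply/rltbP.
  by have := Hys _ Cy1; lra.
Qed.
End Thr.

Lemma comb_bound (T : finType) (e : rel T) (w : T -> T -> R) (a : nat)
  (o : rel T) (t : T -> R) :
  (forall x y, e x y = e y x) ->
  (forall x y, e x y -> 0 < w x y) ->
  (forall x y, e x y -> w x y = w y x) ->
  (forall x y, o x y -> e x y) ->
  (forall x y, e x y -> o x y || o y x) ->
  (forall x, leq #|[pred y | o x y]| a) ->
  (forall x, 0 <= t x) ->
  (forall x, \big[Rplus/0]_(y | e x y && rltb (t x) (w x y)) w x y <= /3 * wdeg e w x) ->
  wgraph e w <= 3 * INR a * \big[Rplus/0]_x t x.
Proof.
move=> esym wpos wsym oe eo odeg t0 T2.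
set L := \big[Rplus/0]_x \big[Rplus/0]_(y | e x y && rleb (w x y) (t x)) w x y.
set Hv := \big[Rplus/0]_x \big[Rplus/0]_(y | e x y && rltb (t x) (w x y)) w x y.
set A := \big[Rplus/0]_x \big[Rplus/0]_(y | e x y && o x y && rleb (w x y) (t x)) w x y.
have nn : forall (P : pred T) x, 0 <= \big[Rplus/0]_(y | e x y && P y) w x y.
  by move=> P x; apply: bigR_ge0 => y /andP [/wpos]; lra.
have E1 : \big[Rplus/0]_x wdeg e w x = L + Hv.
  rewrite /L /Hv -big_split /=; apply: eq_bigr => x _.
  rewrite /wdeg (bigID (fun y => rleb (w x y) (t x))) /=; congr (_ + _).
  by apply: eq_bigl => y; rewrite rltbNle.
have E2 : Hv <= /3 * (L + Hv).
  rewrite -E1 /Hv (big_distrr (/3)) /=; apply: bigR_le => x _; exact: T2.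
have E3 : L <= A + \big[Rplus/0]_x \big[Rplus/0]_(y | e x y && ~~ o x y) w x y.
  rewrite /L /A -big_split /=; apply: bigR_le => x _.
  rewrite (bigID (fun y => o x y)) /=.
  have H1 : \big[Rplus/0]_(i | e x i && rleb (w x i) (t x) && o x i) w x i =
            \big[Rplus/0]_(y | e x y && o x y && rleb (w x y) (t x)) w x y.
    by apply: eq_bigl => y; case: (e x y); case: (o x y); case: (rleb _ _).
  rewrite H1; apply: Rplus_le_compat_l; apply: bigR_sub.
    by move=> y /andP [/andP [-> _] ->].
  by move=> y /andP [/wpos]; lra.
have E4 : \big[Rplus/0]_x \big[Rplus/0]_(y | e x y && ~~ o x y) w x y <=
          \big[Rplus/0]_x \big[Rplus/0]_(y | o x y) w x y.
  apply: (Rle_trans _ (\big[Rplus/0]_x \big[Rplus/0]_(y | o y x) w x y)).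
    apply: bigR_le => x _; apply: bigR_sub.
      by move=> y /andP [exy noxy]; move: (eo x y exy); rewrite (negbTE noxy).
    by move=> y /oe; rewrite esym => /wpos; lra.
  rewrite (exchange_big_dep predT) //=; apply: Req_le; apply: eq_bigr => x _.
  by apply: eq_bigr => y /oe /wsym.
have E5 : \big[Rplus/0]_x \big[Rplus/0]_(y | o x y) w x y <= A + Hv.
  rewrite /A /Hv -big_split /=; apply: bigR_le => x _.
  rewrite (bigID (fun y => rleb (w x y) (t x))) /=; apply: Rplus_le_compat.
    apply: Req_le; apply: eq_bigl => y.
    by case oxy: (o x y); rewrite ?(oe _ _ oxy) //= andbF.
  apply: bigR_sub.
    by move=> y /andP [oxy]; rewrite oe //= rltbNle.
  by move=> y /andP [/wpos]; lra.
have E6 : A <= INR a * \big[Rplus/0]_x t x.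
  rewrite (big_distrr (INR a)) /=; apply: bigR_le => x _.
  apply: (Rle_trans _ (\big[Rplus/0]_(y | o x y) t x)).
    apply: (Rle_trans _ (\big[Rplus/0]_(y | e x y && o x y && rleb (w x y) (t x)) t x)).
      by apply: bigR_le => y /andP [_ /rlebP].
    by apply: bigR_sub => [y /andP [/andP [_ ->]]|y _].
  rewrite (bigR_const (fun y => o x y)); apply: Rmult_le_compat_r => //.
  by apply: le_INR; apply/ssrnat.leP; apply: odeg.
have Hv0 : 0 <= Hv by apply: bigR_ge0 => x _; apply: nn.
rewrite /wgraph E1; lra.
Qed.


Lemma bigRM_ge0 (I : Type) (r : seq I) (P : pred I) (F : I -> R) :
  (forall i, P i -> 0 <= F i) -> 0 <= \big[Rmult/1]_(i <- r | P i) F i.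
Proof.
move=> H; apply: (big_ind (fun a => 0 <= a)); [lra| |exact H].
by move=> a b; apply: Rmult_le_pos.
Qed.

Lemma prod_const_ord (s : nat) c : \big[Rmult/1]_(j < s) c = c ^ s.
Proof. by rewrite big_const_ord; elim: s => //= n ->. Qed.

Lemma bigRmax_ge (I : eqType) (r : seq I) (F : I -> R) j :
  j \in r -> F j <= \big[Rmax/0]_(i <- r) F i.
Proof.
elim: r => // a r IH; rewrite inE big_cons => /orP [/eqP ->|/IH H].
  exact: Rmax_l.
by apply: (Rle_trans _ _ _ H); apply: Rmax_r.
Qed.

Lemma bigRmax_ge0 (I : Type) (r : seq I) (F : I -> R) :
  0 <= \big[Rmax/0]_(i <- r) F i.
Proof.
elim: r => [|a r IH]; rewrite ?big_nil ?big_cons; first lra.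
by apply: (Rle_trans _ _ _ IH); apply: Rmax_r.
Qed.

Section Prob.
Variable T : finType.
Variable e : rel T.
Variable w : T -> T -> R.
Hypothesis wpos : forall x y, e x y -> 0 < w x y.
Variable s : nat.

Lemma pdraw_ge0 x z : 0 <= pdraw e w x z.
Proof.
rewrite /pdraw; case ez: (e x z).
  have hx : has_edge e x by apply/existsP; exists z.
  have := wdeg_gt0 wpos hx; have := wpos ez => H1 H2.
  by apply: Rlt_le; apply: Rdiv_lt_0_compat.
by case: has_edge; [lra | case: (z == x); lra].
Qed.

Lemma pdraw_sum x : \big[Rplus/0]_z pdraw e w x z = 1.
Proof.
rewrite /pdraw; case hx: (has_edge e x).
  rewrite -big_mkcond /= -big_distrl /= -/(wdeg e w x).
  by have := wdeg_gt0 wpos hx; move=> H; field; lra.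
have ne : forall z, e x z = false.
  by move=> z; move/negbT: hx => /existsPn /(_ z) /negbTE.
rewrite (eq_bigr (fun z => if z == x then 1 else 0)); last by move=> z _; rewrite ne.
by rewrite -big_mkcond /= big_pred1_eq.
Qed.

Definition G (x : T) (f : {ffun 'I_s -> T}) := \big[Rmult/1]_(j < s) pdraw e w x (f j).

Lemma G_sum x : \big[Rplus/0]_f G x f = 1.
Proof.
rewrite /G (sum_prod_ffun (fun (j : 'I_s) z => pdraw e w x z)) (eq_bigr (fun _ => 1)) ?prod_const_ord ?pow1 // => j _.
exact: pdraw_sum.
Qed.

Lemma outcome_prob_ge0 (om : outcome T s) : 0 <= outcome_prob e w om.
Proof. by apply: bigRM_ge0 => x _; apply: bigRM_ge0 => j _; apply: pdraw_ge0. Qed.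

Lemma outcome_sum : \big[Rplus/0]_(om : outcome T s) outcome_prob e w om = 1.
Proof.
rewrite /outcome_prob.
rewrite (sum_prod_ffun (fun x (f : {ffun 'I_s -> T}) => G x f)).
by rewrite (eq_bigr (fun _ => 1)) ?big1_eq // => x _; apply: G_sum.
Qed.

Lemma expect_coord (x0 : T) (g : {ffun 'I_s -> T} -> R) :
  \big[Rplus/0]_(om : outcome T s) (outcome_prob e w om * g (om x0)) =
  \big[Rplus/0]_f (G x0 f * g f).
Proof.
pose H x f := G x f * (if x == x0 then g f else 1).
have E : forall om : outcome T s, outcome_prob e w om * g (om x0) =
    \big[Rmult/1]_x H x (om x).
  move=> om; rewrite /H big_split /=; congr (_ * _).
  by rewrite -big_mkcond /= big_pred1_eq.
rewrite (eq_bigr _ (fun om _ => E om)) sum_prod_ffun.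
rewrite (eq_bigr (fun x => if x == x0 then \big[Rplus/0]_f (G x0 f * g f) else 1)).
  by rewrite -big_mkcond /= big_pred1_eq.
move=> x _; rewrite /H; case: eqP => [->|_].
  by [].
by rewrite (eq_bigr (fun f => G x f)) ?G_sum // => f _; rewrite Rmult_1_r.
Qed.

Lemma prod_ind (I : finType) (b : pred I) :
  \big[Rmult/1]_(i : I) (if b i then 1 else 0) = if [forall i, b i] then 1 else 0.
Proof.
case: (boolP [forall i, b i]) => [/forallP H|/forallPn [j /negbTE bj]].
  by rewrite big1 // => i _; rewrite H.
by rewrite (bigD1 j) //= bj Rmult_0_l.
Qed.

Lemma bad_bound x t : 0 <= t ->
  (has_edge e x -> /3 * wdeg e w x <= \big[Rplus/0]_(y | e x y && rleb t (w x y)) w x y) ->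
  (~~ has_edge e x -> t = 0) ->
  \big[Rplus/0]_(om : outcome T s)
     (outcome_prob e w om * (t * (if [forall j, rltb (w x (om x j)) t] then 1 else 0)))
  <= t * (2/3)^s.
Proof.
move=> t0 T1 T3.
case hx: (has_edge e x); last first.
  rewrite T3 ?hx // big1; first lra.
  by move=> om _; rewrite !Rmult_0_l Rmult_0_r.
rewrite (eq_bigr (fun om : outcome T s => t * (outcome_prob e w om *
   (if [forall j, rltb (w x (om x j)) t] then 1 else 0)))); last first.
  by move=> om _; ring.
rewrite -big_distrr /=; apply: Rmult_le_compat_l => //.
rewrite (expect_coord x (fun f => if [forall j, rltb (w x (f j)) t] then 1 else 0)).
rewrite (eq_bigr (fun f : {ffun 'I_s -> T} => \big[Rmult/1]_(j < s)
     (pdraw e w x (f j) * (if rltb (w x (f j)) t then 1 else 0)))); last first.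
  move=> f _; rewrite big_split /= prod_ind //.
rewrite (sum_prod_ffun (fun (j : 'I_s) z => pdraw e w x z * (if rltb (w x z) t then 1 else 0))).
rewrite prod_const_ord; apply: pow_incr; split.
  by apply: bigR_ge0 => z _; case: rltb; rewrite ?Rmult_1_r ?Rmult_0_r; [apply: pdraw_ge0|lra].
have W := wdeg_gt0 wpos hx.
rewrite (eq_bigr (fun z => if e x z && rltb (w x z) t then w x z / wdeg e w x else 0)); last first.
  by move=> z _; rewrite /pdraw hx; case: (e x z); case: rltb => /=; ring.
rewrite -big_mkcond /= -big_distrl /=.
have := T1 hx.
have : wdeg e w x = \big[Rplus/0]_(y | e x y && rleb t (w x y)) w x y +
           \big[Rplus/0]_(y | e x y && rltb (w x y) t) w x y.
  rewrite /wdeg (bigID (fun y => rleb t (w x y))) /=; congr (_ + _).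
  by apply: eq_bigl => y; rewrite rltbNle.
set A1 := \big[Rplus/0]_(y | e x y && rleb t (w x y)) w x y.
set A2 := \big[Rplus/0]_(y | e x y && rltb (w x y) t) w x y.
move=> Ew HA.
apply: (Rmult_le_reg_r (wdeg e w x)) => //.
rewrite Rmult_assoc Rinv_l; lra.
Qed.
End Prob.


Lemma main_bound (T : finType) (e : rel T) (w : T -> T -> R) (alpha s : nat) :
  (1 <= alpha)%nat ->
  (forall x, ~~ e x x) ->
  (forall x y, e x y = e y x) ->
  (forall x y, e x y -> 0 < w x y) ->
  (forall x y, e x y -> w x y = w y x) ->
  arboricity_le e alpha ->
  1 - 16/13 * (2/3)^s <= success_prob e w alpha s.
Proof.
move=> Ha eirr esym wpos wsym arb.
have [o [oe eo odeg]] := orient_arb eirr esym arb.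
have [t Ht] := fin_all_exists (threshold wpos).
have t0 : forall x, 0 <= t x by move=> x; case: (Ht x).
have T1 : forall x, has_edge e x -> /3 * wdeg e w x <=
    \big[Rplus/0]_(y | e x y && rleb (t x) (w x y)) w x y.
  by move=> x hx; case: (Ht x) => _ /(_ hx) [].
have T2 : forall x, \big[Rplus/0]_(y | e x y && rltb (t x) (w x y)) w x y <= /3 * wdeg e w x.
  by move=> x; case: (Ht x).
have T3 : forall x, ~~ has_edge e x -> t x = 0 by move=> x; case: (Ht x).
have Hcomb := comb_bound esym wpos wsym oe eo odeg t0 T2.
set S := \big[Rplus/0]_x t x in Hcomb.
have S0 : 0 <= S by apply: bigR_ge0.
have aR : 1 <= INR alpha by apply: (le_INR 1); apply/ssrnat.leP.
pose ind (x : T) (om : outcome T s) :=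
  if [forall j, rltb (w x (om x j)) (t x)] then 1 else 0.
pose D om := \big[Rplus/0]_x (t x * ind x om).
have DS : forall om, D om <= S.
  move=> om; apply: bigR_le => x _; rewrite /ind; case: ifP => _; have := t0 x; nra.
have D0 : forall om, 0 <= D om.
  move=> om; apply: bigR_ge0 => x _; rewrite /ind; case: ifP => _; have := t0 x; nra.
have sel : forall om x, t x * (1 - ind x om) <= selected_weight w om x.
  move=> om x; rewrite /ind /selected_weight.
  case: (boolP [forall j, rltb (w x (om x j)) (t x)]) => [_|/forallPn [j]].
    by rewrite Rminus_diag Rmult_0_r; apply: bigRmax_ge0.
  rewrite rltbNle negbK => /rlebP Hj.
  rewrite Rminus_0_r Rmult_1_r; apply: (Rle_trans _ _ _ Hj).
  by apply: bigRmax_ge; exact: mem_index_enum.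
have tot : forall om, S - D om <= total_selected e w om.
  move=> om; rewrite /total_selected.
  apply: (Rle_trans _ (\big[Rplus/0]_(x | has_edge e x) (t x * (1 - ind x om)))); last first.
    by apply: bigR_le => x _; apply: sel.
  apply: Req_le.
  rewrite big_mkcond /=.
  rewrite (eq_bigr (fun x => t x + (-1) * (t x * ind x om))); last first.
    move=> x _; case hx: (has_edge e x) => //; first ring.
    by rewrite T3 ?hx //; ring.
  by rewrite big_split /= -big_distrr /=; rewrite /D /S; ring.
have q16 : wgraph e w / (16 * INR alpha) <= 3 * S / 16.
  set q := wgraph e w / (16 * INR alpha).
  have Eq : q * (16 * INR alpha) = wgraph e w by rewrite /q; field; lra.
  nra.
have fail : forall om, ~ (wgraph e w / (16 * INR alpha) <= total_selected e w om) ->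
    13/16 * S < D om.
  move=> om Hn; have := tot om; lra.
have split : \big[Rplus/0]_(om : outcome T s) outcome_prob e w om =
   success_prob e w alpha s +
   \big[Rplus/0]_(om : outcome T s) (if Rle_dec (wgraph e w / (16 * INR alpha)) (total_selected e w om)
                     then 0 else outcome_prob e w om).
  rewrite /success_prob -big_split /=; apply: eq_bigr => om _.
  by destruct (Rle_dec _ _); simpl; ring.
rewrite (@outcome_sum T e w wpos s) in split.
set F := \big[Rplus/0]_(om : outcome T s) _ in split.
suff : F <= 16/13 * (2/3)^s by lra.
case: (Rle_lt_dec S 0) => HS.
  rewrite /F big1; first by apply: Rmult_le_pos; [lra | apply: pow_le; lra].
  move=> om _; destruct (Rle_dec _ _) as [Hy|Hn]; [reflexivity|exfalso].
  by have := fail om Hn; have := DS om; lra.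
pose K := 16 / (13 * S).
apply: (Rle_trans _ (\big[Rplus/0]_(om : outcome T s) (K * (outcome_prob e w om * D om)))).
  apply: bigR_le => om _; destruct (Rle_dec _ _) as [Hy|Hn]; simpl.
    by apply: Rmult_le_pos; [rewrite /K; apply: Rlt_le; apply: Rdiv_lt_0_compat; lra
       | apply: Rmult_le_pos; [apply: outcome_prob_ge0 | apply: D0]].
  have H1 := fail om Hn; have H2 := outcome_prob_ge0 wpos om.
  have : 1 <= K * D om.
    rewrite /K; apply: (Rmult_le_reg_r (13 * S)); first lra.
    by rewrite Rmult_1_l; field_simplify; lra.
  nra.
rewrite -big_distrr /=.
rewrite (eq_bigr (fun om => \big[Rplus/0]_x (outcome_prob e w om * (t x * ind x om)))); last first.
  by move=> om _; rewrite /D big_distrr.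
rewrite exchange_big /=.
apply: (Rle_trans _ (K * \big[Rplus/0]_x (t x * (2/3)^s))).
  apply: Rmult_le_compat_l; first by rewrite /K; apply: Rlt_le; apply: Rdiv_lt_0_compat; lra.
  apply: bigR_le => x _; apply: (bad_bound wpos) => //; first exact: T1.
  exact: T3.
rewrite -big_distrl /= -/S /K; apply: Req_le; field; lra.

Qed.


Close Scope R_scope.

Theorem mainTheorem14 :
  forall alpha : nat, (1 <= alpha)%N ->
  exists c : R, (0 < c)%R /\
  forall (T : finType) (e : rel T) (w : T -> T -> R),
    (forall x, ~~ e x x) ->
    (forall x y, e x y = e y x) ->
    (forall x y, e x y -> (0 < w x y)%R) ->
    (forall x y, e x y -> w x y = w y x) ->
    arboricity_le e alpha ->
    forall (delta : R) (s : nat),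
      (0 < delta < 1)%R ->
      (c * ln (1 / delta) <= INR s)%R ->
      (1 - delta <= success_prob e w alpha s)%R.
Proof.
move=> alpha Ha; exists (1 / ln (39/32))%R; split.
  have k0 : (0 < ln (39/32))%R by rewrite -ln_1; apply: ln_increasing; lra.
  by apply: Rdiv_lt_0_compat; lra.
move=> T e w eirr esym wpos wsym arb delta s Hd Hs.
have H1 := numeric Hd Hs.
have H2 := main_bound s Ha eirr esym wpos wsym arb.
lra.
Qed.
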